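(* In the algebra $\mathcal A$, for every $i\in[1,n-1]$, $$\alpha_i(x_i)\,\alpha_i(x_{i+1})=\alpha_i(x_{i+1})\,\alpha_i(x_i).$$
   Context: Let $R=\mathbb Z[\mu_1,\mu_2]$. Fix $n\ge2$. Let $\mathcal A$ be the associative algebra over $R[[x_1,\dots,x_n]]$ generated by $u_1,\dots,u_{n-1}$ subject to: the $x_j$ commute with all $u_i$; $u_iu_j=u_ju_i$ for $|i-j|>1$; $u_iu_{i+1}u_i=u_{i+1}u_iu_{i+1}$; $u_i^2=-\mu_1u_i$; and $\mu_2x_ix_{i+1}u_i=0$ for all $i$. For $i\in[1,n-1]$ and $x\in R[[x_1,\dots,x_n]]$, set $\alpha_i(x)=(1+xu_{n-1})(1+xu_{n-2})\cdots(1+xu_i)$. *)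

(* Defs.v *)
From HB Require Import structures.
From mathcomp Require Import all_boot all_order all_algebra.
Set Implicit Arguments. Unset Strict Implicit. Unset Printing Implicit Defensive.
Import GRing.Theory.
Local Open Scope ring_scope.

(* alpha_i(x) = (1 + x u_{n-1}) (1 + x u_{n-2}) ... (1 + x u_i),
   generators u indexed by naturals 1..n-1 (values outside are irrelevant). *)
Definition alpha (B : ringType) (u : nat -> B) (n i : nat) (x : B) : B :=
  \prod_(j <- rev (iota i (n - i))) (1 + x * u j).

(* Main.v *)
From HB Require Import structures.
From mathcomp Require Import all_boot all_order all_algebra.
Import GRing.Theory.
Local Open Scope ring_scope.
From mathcomp Require Import zify.
Require Import Defs.

Ltac cmr := repeat first [apply: commrD | apply: commrB | apply: commrM | apply: commrN | apply: commr1 | apply: commr0].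
Ltac cm := cmr; try (apply/commr_sym; cmr); try solve [assumption | apply: commr_refl | apply/commr_sym; assumption].

Lemma add5 (V : zmodType) (x p q w p' q' : V) :
  (x + p + (q + w)) - (x + p' + (q' + w)) = (p - p') + (q - q').
Proof.
rewrite opprD addrACA opprD (addrACA x) subrr add0r opprD (addrACA q) (subrr w) addr0 //.
Qed.

Lemma add6 (V : zmodType) (x p q w x' q' : V) :
  (x + p + (q + w)) - (x' + q' + (p + w)) = (x - x') + (q - q').
Proof.
rewrite opprD addrACA opprD (addrACA x) opprD (addrACA q) (subrr w) addr0.
rewrite -[LHS]addrA; congr (_ + _).
by rewrite addrC addrA subrK.
Qed.

Lemma YB (R : nzRingType) (m a b u1 u2 : R) :
  GRing.comm a u1 -> GRing.comm a u2 -> GRing.comm b u1 -> GRing.comm b u2 ->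
  GRing.comm m u1 -> GRing.comm m u2 -> GRing.comm m a -> GRing.comm m b ->
  GRing.comm a b -> u1 * u1 = - (m * u1) -> u2 * u2 = - (m * u2) ->
  u1 * u2 * u1 = u2 * u1 * u2 ->
  (1 + a * u1) * (1 + b * u2) * ((1 - m * a) + (b - a) * u1) =
  ((1 - m * a) + (b - a) * u2) * (1 + b * u1) * (1 + a * u2).
Proof.
move=> au1 au2 bu1 bu2 mu1 mu2 ma mb ab q1 q2 br.
have hX : (1 + a * u1) * (1 + b * u2) = 1 + b * u2 + (a * u1 + a * b * (u1 * u2)).
  by rewrite mulrDl mul1r !mulrDr mulr1 -mulrA (mulrA u1 b) -bu1 !mulrA.
have hY : (1 + b * u1) * (1 + a * u2) = 1 + a * u2 + (b * u1 + a * b * (u1 * u2)).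
  by rewrite mulrDl mul1r !mulrDr mulr1 -mulrA (mulrA u1 a) -au1 !mulrA ab.
have hXY : (1 + a * u1) * (1 + b * u2) - (1 + b * u1) * (1 + a * u2)
    = (a - b) * (u1 - u2).
  rewrite hX hY add5 -!mulrBl mulrBr -[a - b]opprB !mulNr opprK [LHS]addrC //.
have hXu : (1 + a * u1) * (1 + b * u2) * u1 = u1 + b * (u2 * u1) + (- (a * m) * u1 + a * b * (u1 * u2 * u1)).
  rewrite hX !mulrDl mul1r -!mulrA q1 mulrN mulrA mulNr.
  by rewrite !mulrA.
have huY : u2 * ((1 + b * u1) * (1 + a * u2)) = u2 + - (a * m) * u2 + (b * (u2 * u1) + a * b * (u1 * u2 * u1)).
  rewrite hY !mulrDr mulr1 !mulrA -au2 -bu2 -(mulrA a u2 u2) q2 mulrN mulrA mulNr.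
  have e : forall z, z * u2 * u1 * u2 = z * u1 * u2 * u1.
    by move=> z; rewrite -(mulrA (z * u2)) -(mulrA z) (mulrA u2) -br !mulrA.
  rewrite -(mulrA a u2 b) -bu2 !mulrA e //.
have hd : (1 + a * u1) * (1 + b * u2) * u1 - u2 * ((1 + b * u1) * (1 + a * u2))
    = (1 - m * a) * (u1 - u2).
  rewrite hXu huY add6 mulrBl mul1r ma mulrBr !mulNr opprK opprB [_ * u2 - _]addrC //.
have cX : GRing.comm ((1 + a * u1) * (1 + b * u2)) (1 - m * a) by cm.
have eX : GRing.comm ((1 + a * u1) * (1 + b * u2)) (b - a) by cm.
rewrite mulrDr cX (mulrA _ (b - a) u1) eX -mulrA -(mulrA (1 - m * a + _)) [RHS]mulrDl -(mulrA (b - a) u2).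
apply/eqP; rewrite -subr_eq0 opprD addrACA -!mulrBr hXY hd !mulrA -mulrDl.
have ec : GRing.comm (b - a) (1 - m * a) by cm.
rewrite ec -mulrDr -[a - b]opprB addNr mulr0 mul0r //.
Qed.

Lemma F1 (R : nzRingType) (m a b u : R) :
  GRing.comm a u -> GRing.comm b u -> GRing.comm m u -> GRing.comm m a ->
  GRing.comm m b -> u * u = - (m * u) ->
  (1 + a * u) * ((1 - m * a) + (b - a) * u) = (1 - m * a) * (1 + b * u).
Proof.
move=> au bu mu ma mb uu.
have uc : GRing.comm u (1 - m * a).
  apply: commrB; [exact: commr1 | apply: commrM; apply/commr_sym; done].
have uba : GRing.comm u (b - a) by apply: commrB; apply/commr_sym.
rewrite mulrDl mul1r [RHS]mulrDr mulr1 -addrA; congr (_ + _).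
rewrite mulrDr -mulrA uc !mulrA -(mulrA a u) uba mulrA -(mulrA _ u u) uu mulrN mulrA.
rewrite -mulrBl -mulrDl; congr (_ * _).
have e1 : a * (m * a) = a * a * m by rewrite ma mulrA.
have e2 : m * a * b = a * b * m by rewrite ma -mulrA mb mulrA.
rewrite mulrBr mulr1 e1 !mulrBl mul1r e2 (mulrBr a b a) mulrBl.
by rewrite opprB (addrA (a - _)) subrK addrA subrK.
Qed.
Lemma alpha_rec (R : nzRingType) (u : nat -> R) n k x : (k < n)%N ->
  alpha u n k x = alpha u n k.+1 x * (1 + x * u k).
Proof.
move=> kn; rewrite /alpha.
have -> : (n - k = (n - k.+1).+1)%N by rewrite subnSK.
by rewrite /= rev_cons -cats1 big_cat big_seq1.
Qed.
Lemma alpha_n (R : nzRingType) (u : nat -> R) n x : alpha u n n x = 1.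
Proof. by rewrite /alpha subnn big_nil. Qed.
Lemma alpha_comm (R : nzRingType) (u : nat -> R) n k x (z : R) :
  (forall j, (k <= j < n)%N -> GRing.comm z (1 + x * u j)) ->
  GRing.comm z (alpha u n k x).
Proof.
move=> H; rewrite /alpha big_seq; apply: (big_ind (GRing.comm z)).
- exact: commr1.
- by move=> *; apply: commrM.
- by move=> j; rewrite mem_rev mem_iota => hj; apply: H; lia.
Qed.

Lemma Qlem (R : nzRingType) (n : nat) (m a b : R) (u : nat -> R) :
  (forall j, (1 <= j < n)%N -> GRing.comm m (u j)) ->
  (forall j, (1 <= j < n)%N -> GRing.comm a (u j)) ->
  (forall j, (1 <= j < n)%N -> GRing.comm b (u j)) ->
  GRing.comm m a -> GRing.comm m b -> GRing.comm a b ->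
  (forall i j : nat, (1 <= i < n)%N -> (1 <= j < n)%N ->
     (i.+1 < j)%N || (j.+1 < i)%N -> GRing.comm (u i) (u j)) ->
  (forall i : nat, (1 <= i)%N -> (i.+1 < n)%N ->
     u i * u i.+1 * u i = u i.+1 * u i * u i.+1) ->
  (forall i : nat, (1 <= i < n)%N -> u i * u i = - (m * u i)) ->
  forall k, (1 <= k < n)%N ->
  alpha u n k a * alpha u n k.+1 b * ((1 - m * a) + (b - a) * u k)
  = (1 - m * a) * (alpha u n k b * alpha u n k.+1 a).
Proof.
move=> Hm Ha Hb ma mb ab Hfar Hbr Hq k.
move Hd: (n - k)%N => d; elim: d k Hd => [|d IH] k Hd Hk; first by lia.
have k1 : (1 <= k < n)%N by [].
have mk := Hm k k1; have ak := Ha k k1; have bk := Hb k k1; have qk := Hq k k1.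
case: d IH Hd => [|d] IH Hd.
  have kn : (k < n)%N by lia.
  have e : k.+1 = n by lia.
  rewrite (@alpha_rec _ u n k a kn) (@alpha_rec _ u n k b kn) e !alpha_n !mul1r !mulr1.
  by apply: F1.
have k2 : (1 <= k.+1 < n)%N by lia.
have mk2 := Hm _ k2; have ak2 := Ha _ k2; have bk2 := Hb _ k2; have qk2 := Hq _ k2.
have IHk := IH k.+1 ltac:(lia) k2.
have kn : (k < n)%N by lia.
have kn2 : (k.+1 < n)%N by lia.
rewrite (@alpha_rec _ u n k a kn) (@alpha_rec _ u n k.+1 b kn2).
have c1 : GRing.comm (1 + a * u k) (alpha u n k.+2 b).
  apply: alpha_comm => j hj.
  have j1 : (1 <= j < n)%N by lia.
  have kj := Hfar k j k1 j1 ltac:(apply/orP; left; lia).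
  have aj := Ha j j1; have bj := Hb j j1.
  by cm.
have c2 : GRing.comm (1 + b * u k) (alpha u n k.+2 a).
  apply: alpha_comm => j hj.
  have j1 : (1 <= j < n)%N by lia.
  have kj := Hfar k j k1 j1 ltac:(apply/orP; left; lia).
  have aj := Ha j j1; have bj := Hb j j1.
  by cm.
have yb : (1 + a * u k) * (1 + b * u k.+1) * ((1 - m * a) + (b - a) * u k) =
  ((1 - m * a) + (b - a) * u k.+1) * (1 + b * u k) * (1 + a * u k.+1).
  by apply: YB => //; apply: Hbr; lia.
rewrite !mulrA.
rewrite -(mulrA (alpha u n k.+1 a) (1 + a * u k)) c1 !mulrA.
rewrite -(mulrA _ (1 + a * u k)) -(mulrA _ ((1 + a * u k) * _)) yb !mulrA IHk.
rewrite (@alpha_rec _ u n k b kn) (@alpha_rec _ u n k.+1 a kn2).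
rewrite -!mulrA; congr (_ * _); rewrite !mulrA; congr (_ * _).
by rewrite -!mulrA c2.
Qed.

Lemma Core (R : nzRingType) (n : nat) (m a b : R) (u : nat -> R) :
  (forall j, (1 <= j < n)%N -> GRing.comm m (u j)) ->
  (forall j, (1 <= j < n)%N -> GRing.comm a (u j)) ->
  (forall j, (1 <= j < n)%N -> GRing.comm b (u j)) ->
  GRing.comm m a -> GRing.comm m b -> GRing.comm a b ->
  (forall i j : nat, (1 <= i < n)%N -> (1 <= j < n)%N ->
     (i.+1 < j)%N || (j.+1 < i)%N -> GRing.comm (u i) (u j)) ->
  (forall i : nat, (1 <= i)%N -> (i.+1 < n)%N ->
     u i * u i.+1 * u i = u i.+1 * u i * u i.+1) ->
  (forall i : nat, (1 <= i < n)%N -> u i * u i = - (m * u i)) ->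
  forall i, (1 <= i < n)%N ->
  alpha u n i a * alpha u n i b * ((1 - m * a) + (b - a) * u i)
  = alpha u n i b * alpha u n i a * ((1 - m * a) + (b - a) * u i).
Proof.
move=> Hm Ha Hb ma mb ab Hfar Hbr Hq i Hi.
have Q := @Qlem _ n m a b u Hm Ha Hb ma mb ab Hfar Hbr Hq i Hi.
have mi := Hm i Hi; have ai := Ha i Hi; have bi := Hb i Hi; have qi := Hq i Hi.
have kn : (i < n)%N by lia.
have hg : GRing.comm (1 + b * u i) ((1 - m * a) + (b - a) * u i) by cm.
have cA : forall x, (forall j, (1 <= j < n)%N -> GRing.comm x (u j)) ->
    GRing.comm m x -> GRing.comm a x -> forall k, (1 <= k)%N ->
    GRing.comm (1 - m * a) (alpha u n k x).
  move=> x Hx mx ax k k1; apply: alpha_comm => j hj.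
  have j1 : (1 <= j < n)%N by lia.
  have := Hx j j1; have := Hm j j1; have := Ha j j1 => aj mj xj.
  by cm.
have L : alpha u n i a * alpha u n i b * ((1 - m * a) + (b - a) * u i)
   = (1 - m * a) * (alpha u n i b * alpha u n i.+1 a) * (1 + b * u i).
  rewrite {1}(@alpha_rec _ u n i b kn) mulrA -(mulrA _ (1 + b * u i)) hg mulrA Q //.
have Rr : alpha u n i b * alpha u n i a * ((1 - m * a) + (b - a) * u i)
   = (1 - m * a) * (alpha u n i b * alpha u n i.+1 a) * (1 + b * u i).
  rewrite {1}(@alpha_rec _ u n i a kn) mulrA -(mulrA _ (1 + a * u i)) F1 //.
  rewrite mulrA; congr (_ * _).
  have c1 := cA b Hb mb ab i ltac:(lia).
  have c2 := cA a Ha ma (commr_refl a) i.+1 ltac:(lia).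
  by rewrite (commrM c1 c2).
by rewrite L Rr.
Qed.

Lemma comm_CX (B : nzRingType) (c d : B) : GRing.comm c d ->
  GRing.comm (c%:P * 'X) d%:P.
Proof.
move=> cd; rewrite /GRing.comm -mulrA -commr_polyX mulrA -polyCM cd polyCM -mulrA //.
Qed.

Lemma eval_prod (B : nzRingType) (u : nat -> B) (c : B) (s : seq nat) :
  (\prod_(j <- s) (1 + c%:P * 'X * (u j)%:P)).[1] = \prod_(j <- s) (1 + c * u j).
Proof.
elim: s => [|j s IH]; first by rewrite !big_nil -polyC1 hornerC.
rewrite !big_cons hornerM_comm; last by rewrite /comm_poly mulr1 mul1r.
rewrite IH; congr (_ * _).
rewrite -mulrA -commr_polyX mulrA -polyCM hornerD -polyC1 hornerC hornerMX hornerC mulr1 //.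
Qed.

Lemma eval_alpha (B : nzRingType) (u : nat -> B) (c : B) n i :
  (alpha (fun j => (u j)%:P) n i (c%:P * 'X)).[1] = alpha u n i c.
Proof. exact: eval_prod. Qed.

Lemma cancel_poly (B : nzRingType) (D : {poly B}) (W : B) :
  D * (1 - W%:P * 'X) = 0 -> D = 0.
Proof.
move=> H.
have e1 : D = D * (W%:P * 'X) by apply/eqP; rewrite -subr_eq0 -{1}(mulr1 D) -mulrBr H.
have ek : forall k, D = D * (W%:P * 'X) ^+ k.
  elim=> [|k IH]; first by rewrite expr0 mulr1.
  by rewrite exprSr mulrA -IH -e1.
apply/polyP => j; rewrite coef0 (ek j.+1) exprMn_comm; last exact: commr_polyX.
by rewrite mulrA coefMXn ltnSn.
Qed.

Theorem mainTheorem11 (B : ringType) (n : nat) (mu1 mu2 : B) (x u : nat -> B) :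
  (2 <= n)%N ->
  (forall b : B, mu1 * b = b * mu1) ->
  (forall b : B, mu2 * b = b * mu2) ->
  (forall (j : nat) (b : B), (1 <= j <= n)%N -> x j * b = b * x j) ->
  (forall i j : nat, (1 <= i < n)%N -> (1 <= j < n)%N ->
     (i.+1 < j)%N || (j.+1 < i)%N -> u i * u j = u j * u i) ->
  (forall i : nat, (1 <= i)%N -> (i.+1 < n)%N ->
     u i * u i.+1 * u i = u i.+1 * u i * u i.+1) ->
  (forall i : nat, (1 <= i < n)%N -> u i * u i = - (mu1 * u i)) ->
  (forall i : nat, (1 <= i < n)%N -> mu2 * x i * x i.+1 * u i = 0) ->
  forall i : nat, (1 <= i < n)%N ->
    alpha u n i (x i) * alpha u n i (x i.+1) =
    alpha u n i (x i.+1) * alpha u n i (x i).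
Proof.
move=> n2 Hmu Hmu2 Hx Hfar Hbr Hq _ i Hi.
pose u' := fun j => (u j)%:P.
have xi : forall d, GRing.comm (x i) d by move=> d; apply: Hx; lia.
have xj : forall d, GRing.comm (x i.+1) d by move=> d; apply: Hx; lia.
have h1 : forall j, (1 <= j < n)%N -> GRing.comm mu1%:P (u' j).
  by move=> j _; rewrite /GRing.comm /u' -!polyCM Hmu.
have h2 : forall j, (1 <= j < n)%N -> GRing.comm ((x i)%:P * 'X) (u' j).
  by move=> j _; apply: comm_CX.
have h3 : forall j, (1 <= j < n)%N -> GRing.comm ((x i.+1)%:P * 'X) (u' j).
  by move=> j _; apply: comm_CX.
have h4 : GRing.comm mu1%:P ((x i)%:P * 'X).
  by apply/commr_sym; apply: comm_CX; apply/commr_sym.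
have h5 : GRing.comm mu1%:P ((x i.+1)%:P * 'X).
  by apply/commr_sym; apply: comm_CX; apply/commr_sym.
have h6 : GRing.comm ((x i)%:P * 'X) ((x i.+1)%:P * 'X).
  by apply: commrM; [apply: comm_CX | apply: commr_polyX].
have h7 : forall a b : nat, (1 <= a < n)%N -> (1 <= b < n)%N ->
     (a.+1 < b)%N || (b.+1 < a)%N -> GRing.comm (u' a) (u' b).
  by move=> a b ha hb hab; rewrite /GRing.comm /u' -!polyCM Hfar.
have h8 : forall a : nat, (1 <= a)%N -> (a.+1 < n)%N ->
     u' a * u' a.+1 * u' a = u' a.+1 * u' a * u' a.+1.
  by move=> a ha hb; rewrite /u' -!polyCM Hbr.
have h9 : forall a : nat, (1 <= a < n)%N -> u' a * u' a = - (mu1%:P * u' a).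
  by move=> a ha; rewrite /u' -!polyCM Hq // polyCN.
have core := @Core _ n (mu1%:P) ((x i)%:P * 'X) ((x i.+1)%:P * 'X) u' h1 h2 h3 h4 h5 h6 h7 h8 h9 i Hi.
have E : alpha u' n i ((x i)%:P * 'X) * alpha u' n i ((x i.+1)%:P * 'X) =
         alpha u' n i ((x i.+1)%:P * 'X) * alpha u' n i ((x i)%:P * 'X).
  apply/eqP; rewrite -subr_eq0; apply/eqP.
  apply: (@cancel_poly _ _ (mu1 * x i - (x i.+1 - x i) * u i)).
  have -> : 1 - (mu1 * x i - (x i.+1 - x i) * u i)%:P * 'X =
     (1 - mu1%:P * ((x i)%:P * 'X) + ((x i.+1)%:P * 'X - (x i)%:P * 'X) * u' i).
    rewrite polyCB mulrBl opprB addrA -mulrBl -polyCB /u' -mulrA -commr_polyX mulrA -polyCM.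
    by rewrite mulrA -polyCM addrAC.
  by rewrite mulrBl core subrr.
have := congr1 (fun p => p.[1]) E => /=.
rewrite !hornerM_comm; try by rewrite /comm_poly mulr1 mul1r.
by rewrite !eval_alpha.
Qed.
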